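(* There exists a probabilistic database that has the finite moments property but is not in $\mathsf{FO}(\mathsf{TI})$.
   Context: Fix a countably infinite universe $U$. A database schema $\tau$ is a finite nonempty set of relation symbols with arities; a $\tau$-fact is an expression $R(u_1,\dots,u_{\mathrm{ar}(R)})$ with $R\in\tau$, $u_i\in U$; a $\tau$-instance is a finite set of $\tau$-facts, and $\mathrm{adom}(D)$ is the set of elements of $U$occurring in $D$. A probabilistic database (PDB) of schema $\tau$ is a discrete probability space $(\mathbb{D},P)$ where $\mathbb{D}$ is a nonempty countable set of $\tau$-instances. The instance size is the random variable $D\mapsto |D|$ (number of facts). A PDB has the finite moments property if $\mathbb{E}(|\cdot|^k)=\sum_{D\in\mathbb{D}}|D|^kP(\{D\})<\infty$ for all $k\in\mathbb{N}_+$. A PDB $\mathcal{I}$ is tuple-independent (TI) if for all $k$ and all pairwise distinct facts $f_1,\dots,f_k$, $\Pr_{I\sim\mathcal I}(f_1\in I,\dots,f_k\in I)=\prod_i\Pr_{I\sim\mathcal I}(f_i\in I)$; $\mathsf{TI}$ is the class of all TI-PDBs. A view $V$ maps instances of an input schema to instances of an output schema; the image of a PDB $(\mathbb D,P)$ under $V$ is the PDB on $V(\mathbb D)$ with $P'(\{D'\})=P(\{D\in\mathbb D: V(D)=D'\})$. An FO-view consists of one first-order formula $\Phi_R(x_1,\dots,x_{\mathrm{ar}(R)})$ (constants from $U$ allowed) per output relation symbol $R$, evaluated under active domain semantics: quantifiers range over $\mathrm{adom}(D)$ together with the constants of the formula, and the output contains $R(\bar a)$ exactly for the tuples $\bar a$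 over this set with $D\models\Phi_R[\bar a]$. $\mathsf{FO}(\mathsf{TI})$ is the class of images of TI-PDBs under FO-views. *)

(* Defs.v *)
From HB Require Import structures.
From mathcomp Require Import all_boot all_order all_algebra.
From mathcomp Require Import finmap.
From mathcomp Require Import all_classical all_reals all_analysis.
From mathcomp Require Import Rstruct.

Set Implicit Arguments.
Unset Strict Implicit.
Unset Printing Implicit Defensive.

Import Order.TTheory GRing.Theory Num.Theory.

Definition R : realType := Rdefinitions.R.

Definition U := nat.

(* A schema: a finite nonempty set of relation symbols 'I_(nrel.+1)
   with arities. *)
Record schema := Schema { nrel : nat; arity : 'I_nrel.+1 -> nat }.

Definition sym (tau : schema) := 'I_(nrel tau).+1.

Definition fact (tau : schema) := {Rs : sym tau & (arity Rs).-tuple U}.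

Definition instance (tau : schema) := {fset fact tau}.

Definition adom (tau : schema) (D : instance tau) : seq U :=
  flatten [seq tval (tagged f) | f <- enum_fset D].

Definition isize (tau : schema) (D : instance tau) : nat := #|` D|.

Record pdb (tau : schema) := PDB {
  mass : instance tau -> R;
  mass_ge0 : forall D, (0 <= mass D)%R;
  mass_sum1 : (esum [set: instance tau] (fun D => (mass D)%:E) = 1)%E }.

Local Open Scope classical_set_scope.

Definition prob (tau : schema) (P : pdb tau) (E : set (instance tau)) : R :=
  fine (esum E (fun D => (mass P D)%:E)).

Definition finite_moments (tau : schema) (P : pdb tau) : Prop :=
  forall k : nat, (0 < k)%N ->
    (esum [set: instance tau]
        (fun D => (((isize D)%:R ^+ k * mass P D)%R)%:E) < +oo)%E.

Definition tuple_independent (tau : schema) (P : pdb tau) : Prop :=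
  forall F : {fset fact tau},
    prob P [set D | fsubset F D] =
    (\prod_(f <- enum_fset F) prob P [set D | f \in D])%R.

Inductive term := Var of nat | Const of U.

Inductive formula (tau : schema) :=
  | FEq of term & term
  | FAtom of sym tau & seq term
  | FNot of formula tau
  | FAnd of formula tau & formula tau
  | FOr of formula tau & formula tau
  | FEx of nat & formula tau
  | FAll of nat & formula tau.

Definition term_vars (t : term) : seq nat :=
  match t with Var i => [:: i] | Const _ => [::] end.

Definition term_consts (t : term) : seq U :=
  match t with Var _ => [::] | Const c => [:: c] end.

Fixpoint fv (tau : schema) (phi : formula tau) : seq nat :=
  match phi with
  | FEq t1 t2 => term_vars t1 ++ term_vars t2
  | FAtom _ ts => flatten (map term_vars ts)
  | FNot p => fv p
  | FAnd p q => fv p ++ fv q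
  | FOr p q => fv p ++ fv q
  | FEx i p => seq.filter (fun j => j != i) (fv p)
  | FAll i p => seq.filter (fun j => j != i) (fv p)
  end.

Fixpoint consts (tau : schema) (phi : formula tau) : seq U :=
  match phi with
  | FEq t1 t2 => term_consts t1 ++ term_consts t2
  | FAtom _ ts => flatten (map term_consts ts)
  | FNot p => consts p
  | FAnd p q => consts p ++ consts q
  | FOr p q => consts p ++ consts q
  | FEx _ p => consts p
  | FAll _ p => consts p
  end.

Definition term_eval (env : nat -> U) (t : term) : U :=
  match t with Var i => env i | Const c => c end.

Definition upd (env : nat -> U) (i : nat) (a : U) : nat -> U :=
  fun j => if j == i then a else env j.

(* Satisfaction D |= phi[env], quantifiers ranging over the finite domain
   dom (active domain semantics: dom = adom(D) ++ constants of the formula). *)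
Fixpoint sat (tau : schema) (D : instance tau) (dom : seq U)
    (env : nat -> U) (phi : formula tau) : bool :=
  match phi with
  | FEq t1 t2 => term_eval env t1 == term_eval env t2
  | FAtom Rs ts =>
      has (fun f : fact tau => (tag f == Rs) &&
             (tval (tagged f) == [seq term_eval env t | t <- ts]))
          (enum_fset D)
  | FNot p => ~~ sat D dom env p
  | FAnd p q => sat D dom env p && sat D dom env q
  | FOr p q => sat D dom env p || sat D dom env q
  | FEx i p => has (fun a => sat D dom (upd env i a) p) dom
  | FAll i p => all (fun a => sat D dom (upd env i a) p) dom
  end.

Record fo_view (tau tau' : schema) := FOView {
  Phi : sym tau' -> formula tau;
  Phi_fv : forall Rs : sym tau', all (fun x => (x < arity Rs)%N) (fv (Phi Rs)) }.

Definition tuple_env (s : seq U) : nat -> U := fun i => nth 0%N s i.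

Definition view_output (tau tau' : schema) (V : fo_view tau tau')
    (D : instance tau) (D' : instance tau') : Prop :=
  forall (Rs : sym tau') (t : (arity Rs).-tuple U),
    (Tagged (fun Rs => (arity Rs).-tuple U) t \in D') =
    (let dom := adom D ++ consts (Phi V Rs) in
     all (fun a => a \in dom) t && sat D dom (tuple_env t) (Phi V Rs)).

Definition is_image (tau tau' : schema) (I : pdb tau) (V : fo_view tau tau')
    (P : pdb tau') : Prop :=
  forall D' : instance tau', mass P D' = prob I [set D | view_output V D D'].

Definition in_FO_TI (tau' : schema) (P : pdb tau') : Prop :=
  exists (tau : schema) (I : pdb tau) (V : fo_view tau tau'),
    tuple_independent I /\ is_image I V P.

(* Main.v *)
From HB Require Import structures.
From mathcomp Require Import all_boot all_order all_algebra finmap.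
From mathcomp Require Import zify.
From mathcomp Require Import all_classical all_reals all_analysis.
From mathcomp Require Import Rstruct lra.
Require Import Defs.
Set Implicit Arguments.
Unset Strict Implicit.
Unset Printing Implicit Defensive.
Import Order.TTheory GRing.Theory Num.Theory.

Fixpoint subs {T : Type} (g : seq T) : seq (seq T) :=
  match g with
  | [::] => [:: [::]]
  | x :: g' => [seq x :: s | s <- subs g'] ++ subs g'
  end.

Lemma subs_count (T : eqType) (g : seq T) (a : pred T) :
  (\sum_(s <- subs g) (all a s : nat) = 2 ^ count a g)%N.
Proof.
elim: g => [|x g IH] /=; first by rewrite big_seq1.
rewrite big_cat big_map /= IH.
case: (a x) => /=; last by rewrite big1 // add0n.
by rewrite IH expnS mul2n addnn.
Qed.

Lemma subs_prod (Rg : comPzSemiRingType) (T : Type) (g : seq T) (p : T -> Rg) :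
  (\sum_(s <- subs g) \prod_(f <- s) p f = \prod_(f <- g) (1 + p f))%R.
Proof.
elim: g => [|x g IH] /=; first by rewrite big_seq1 !big_nil.
rewrite big_cat big_map /= big_cons.
under eq_bigr do rewrite big_cons.
by rewrite -big_distrr /= IH mulrDl mul1r addrC.
Qed.

Lemma subs_subseq (T : eqType) (g s : seq T) : s \in subs g -> subseq s g.
Proof.
elim: g s => [|x g IH] s /=; first by rewrite inE => /eqP ->.
rewrite mem_cat => /orP [/mapP [s' Hs' ->]|Hs].
  by rewrite /= eqxx; apply: IH.
by apply: (subseq_trans (IH _ Hs) (subseq_cons g x)).
Qed.

Lemma leq_expb (m n e : nat) : (m <= n)%N -> (m ^ e <= n ^ e)%N.
Proof. by move=> h; elim: e => // e IH; rewrite !expnS leq_mul. Qed.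

Lemma poly_exp (a b : nat) : exists r, (a * r.+1 ^ b < 2 ^ r)%N.
Proof.
set y := (a * b.+1 ^ b)%N.
exists (b.+1 * y)%N.
have h1 : (y.+1 <= 2 ^ y)%N by apply: ltn_expl.
have h2 : ((b.+1 * y).+1 <= b.+1 * y.+1)%N by rewrite mulnS; lia.
have h3 : (a * (b.+1 * y).+1 ^ b <= a * (b.+1 ^ b * y.+1 ^ b))%N.
  by rewrite leq_mul2l -expnMn leq_expb ?orbT.
apply: (leq_ltn_trans h3).
rewrite mulnA -/y.
have h4 : (y * y.+1 ^ b < y.+1 ^ b.+1)%N.
  rewrite [X in (_ < X)%N]expnS ltn_pmul2r // expn_gt0 //.
apply: (leq_trans h4).
rewrite mulnC expnM.
by rewrite leq_expb.
Qed.

Lemma sumn_map_le (T : Type) (s : seq T) (F : T -> nat) M :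
  (forall x, F x <= M)%N -> (sumn (map F s) <= M * size s)%N.
Proof.
move=> h; elim: s => [|x s IH] //=; rewrite mulnS.
by apply: leq_add.
Qed.

Lemma size_adom (tau : schema) (D : instance tau) :
  (size (adom D) <= (\max_(Rs : sym tau) arity Rs) * #|` D|)%N.
Proof.
rewrite /adom size_flatten /shape -map_comp.
apply: sumn_map_le => f /=; rewrite size_tuple.
exact: (@leq_bigmax _ (fun Rs : sym tau => arity Rs) (tag f)).
Qed.

Lemma view_size (tau tau' : schema) (V : fo_view tau tau') :
  exists a b c e : nat, forall D D', view_output V D D' ->
    (#|` D'| <= a * (b * #|` D| + c).+1 ^ e)%N.
Proof.
set CV := flatten [seq consts (Phi V Rs) | Rs <- enum 'I_(nrel tau').+1].
set A := \max_(Rs : sym tau) arity Rs.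
set A' := \max_(Rs : sym tau') arity Rs.
exists (nrel tau').+1, A, (size CV), A' => D D' hv.
set L := adom D ++ CV.
pose T' : finType := {Rs : sym tau' & (arity Rs).-tuple 'I_(size L).+1}.
pose h := fun x : T' => Tagged (fun Rs : sym tau' => (arity Rs).-tuple U)
              (map_tuple (fun i : 'I_(size L).+1 => nth 0%N L i) (tagged x)).
have sub : (D' `<=` seq_fset tt (map h (enum T')))%fset.
  apply/fsubsetP => -[Rs t] ft.
  have := hv Rs t; rewrite ft /= => /esym /andP [hall _].
  have tL : forall a, a \in t -> a \in L.
    move=> a at_; move/allP: hall => /(_ a at_).
    rewrite /L !mem_cat => /orP [->//|ac]; apply/orP; right.
    by apply/flatten_mapP; exists Rs; rewrite ?mem_enum.
  have := seq_fsetE tt (map h (enum T')) (existT _ Rs t : fact tau') => ->.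
  apply/mapP.
  exists (Tagged (fun Rs : sym tau' => (arity Rs).-tuple 'I_(size L).+1)
            (map_tuple (fun a => inord (index a L)) t)); first by rewrite mem_enum.
  rewrite /h /=; congr Tagged; apply: val_inj => /=.
  rewrite -map_comp; apply/esym; apply: map_id_in => a at_ /=.
  by rewrite inordK ?nth_index ?tL // ltnS ltnW // index_mem tL.
apply: (leq_trans (fsubset_leq_card sub)).
rewrite size_seq_fset; apply: (leq_trans (size_undup _)); rewrite size_map -cardE.
rewrite card_tagged.
have : (sumn [seq #|{: (arity i).-tuple 'I_(size L).+1}| | i <- enum 'I_(nrel tau').+1]
        <= (size L).+1 ^ A' * size (enum 'I_(nrel tau').+1))%N.
  apply: sumn_map_le => Rs; rewrite card_tuple card_ord.
  by apply: leq_pexp2l => //; apply: (@leq_bigmax _ (fun Rs : sym tau' => arity Rs) Rs).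
rewrite size_enum_ord => h1; apply: (leq_trans h1); rewrite mulnC leq_mul2l.
apply/orP; right; apply: leq_expb; rewrite ltnS /L size_cat leq_add2r.
exact: size_adom.
Qed.

Local Open Scope classical_set_scope.
Local Open Scope ring_scope.

Lemma ler_prod_seq (T : Type) (s : seq T) (F G : T -> R) :
  (forall i, 0 <= F i <= G i) -> \prod_(i <- s) F i <= \prod_(i <- s) G i.
Proof.
move=> h; elim: s => [|x s IH]; first by rewrite !big_nil.
rewrite !big_cons; have /andP [h1 h2] := h x.
apply: ler_pM => //; apply: prodr_ge0 => i _; by case/andP: (h i).
Qed.

Lemma count_natr (T : Type) (a : pred T) (s : seq T) :
  ((count a s)%:R : R) = \sum_(x <- s) ((a x)%:R : R).
Proof.
elim: s => [|x s IH]; first by rewrite big_nil.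
by rewrite big_cons /= natrD IH.
Qed.

Section PDB.
Variables (tau : schema) (I : pdb tau).
Local Notation m := (mass I).
Local Notation inst := (instance tau).

Lemma esum_mass_le1 (A : set inst) : (esum A (fun D => (m D)%:E) <= 1)%E.
Proof.
rewrite esum_mkcond -(mass_sum1 I); apply: le_esum => D _.
case: ifP => _ //; by rewrite lee_fin mass_ge0.
Qed.

Lemma esum_mass_ge0 (A : set inst) : (0 <= esum A (fun D => (m D)%:E))%E.
Proof. by apply: esum_ge0 => D _; rewrite lee_fin mass_ge0. Qed.

Lemma esum_massE (A : set inst) : esum A (fun D => (m D)%:E) = (prob I A)%:E.
Proof.
rewrite /prob fineK // ge0_fin_numE ?esum_mass_ge0 //.
by apply: (le_lt_trans (esum_mass_le1 A)); rewrite ltry.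
Qed.

Lemma prob_ge0 (A : set inst) : 0 <= prob I A.
Proof. by rewrite -lee_fin -esum_massE esum_mass_ge0. Qed.

Lemma prob_le1 (A : set inst) : prob I A <= 1.
Proof. by rewrite -lee_fin -esum_massE esum_mass_le1. Qed.

Definition Ex (X : inst -> R) := esum [set: inst] (fun D => (X D * m D)%:E).

Lemma probEx (b : pred inst) :
  (prob I [set D | b D])%:E = Ex (fun D => (b D)%:R).
Proof.
rewrite -esum_massE esum_mkcond; apply: eq_esum => D _.
case: (boolP (b D)) => h; first by rewrite mem_set // mul1r.
by rewrite memNset ?mul0r //= => h'; move: h; rewrite h'.
Qed.

Lemma Ex_ge0 X : (forall D, 0 <= X D) -> (0 <= Ex X)%E.
Proof.
move=> h; apply: esum_ge0 => D _; rewrite lee_fin mulr_ge0 ?mass_ge0 //.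
Qed.

Lemma ExD X Y : (forall D, 0 <= X D) -> (forall D, 0 <= Y D) ->
  Ex (fun D => X D + Y D) = (Ex X + Ex Y)%E.
Proof.
move=> hX hY; rewrite /Ex -esumD; last 2 first.
- by move=> D _; rewrite lee_fin mulr_ge0 ?mass_ge0.
- by move=> D _; rewrite lee_fin mulr_ge0 ?mass_ge0.
by apply: eq_esum => D _; rewrite mulrDl EFinD.
Qed.

Lemma Ex_le X Y : (forall D, X D <= Y D) -> (Ex X <= Ex Y)%E.
Proof.
move=> h; apply: le_esum => D _; rewrite lee_fin.
by apply: ler_wpM2r; rewrite ?mass_ge0.
Qed.

Lemma Ex_sum (T : Type) (s : seq T) (X : T -> inst -> R) :
  (forall i D, 0 <= X i D) ->
  Ex (fun D => \sum_(i <- s) X i D) = (\sum_(i <- s) Ex (X i))%E.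
Proof.
move=> h; rewrite /Ex.
have -> : (fun D => ((\sum_(i <- s) X i D) * m D)%:E) =
          (fun D => \sum_(i <- s) (X i D * m D)%:E)%E.
  by apply: funext => D; rewrite mulr_suml sumEFin.
elim: s => [|x s IH].
  by rewrite big_nil; apply: esum1 => D _; rewrite big_nil.
rewrite big_cons -IH -esumD.
- by apply: eq_esum => D _; rewrite big_cons.
- by move=> D _; rewrite lee_fin mulr_ge0 ?mass_ge0.
- move=> D _; apply: sume_ge0 => i _; by rewrite lee_fin mulr_ge0 ?mass_ge0.
Qed.

Lemma Ex1 : Ex (fun _ => 1) = 1%E.
Proof. by rewrite /Ex -(mass_sum1 I); apply: eq_esum => D _; rewrite mul1r. Qed.

End PDB.

Local Open Scope classical_set_scope.
Local Open Scope ring_scope.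

Section TI.
Variables (tau : schema) (I : pdb tau).
Hypothesis HTI : tuple_independent I.
Local Notation m := (mass I).
Local Notation inst := (instance tau).

Definition pr (f : fact tau) := prob I [set D | f \in D].

Lemma TI_seq (s : seq (fact tau)) : uniq s ->
  prob I [set D | all (fun f => f \in D) s] = \prod_(f <- s) pr f.
Proof.
move=> us; have := HTI (seq_fset tt s).
have -> : [set D | fsubset (seq_fset tt s) D] =
          [set D : inst | all (fun f => f \in D) s].
  apply/seteqP; split => D /=.
    by move=> /fsubsetP h; apply/allP => x xs; apply: h; have := seq_fsetE tt s x; rewrite xs; apply.
  by move=> /allP h; apply/fsubsetP => x; have := seq_fsetE tt s x => -> /h.
move=> ->; apply: perm_big.
by have := seq_fset_perm tt s; rewrite undup_id.
Qed.

Lemma pr_ge0 f : 0 <= pr f. Proof. exact: prob_ge0. Qed.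
Lemma pr_le1 f : pr f <= 1. Proof. exact: prob_le1. Qed.

Lemma Ex_pr f : Ex I (fun D => (f \in D)%:R) = (pr f)%:E.
Proof. by rewrite /pr probEx. Qed.


Lemma Ex_pair f g : f != g ->
  Ex I (fun D => (f \in D)%:R * (g \in D)%:R) = (pr f * pr g)%:E.
Proof.
move=> fg.
have -> : (fun D : inst => ((f \in D)%:R * (g \in D)%:R : R)) =
          (fun D => (all (fun x => x \in D) [:: f; g])%:R).
  by apply: funext => D /=; rewrite andbT -natrM mulnb.
rewrite -probEx TI_seq /=; last by rewrite inE fg.
by rewrite big_cons big_seq1.
Qed.

Lemma sum_le_count (s : seq (fact tau)) (P : pred (fact tau)) :
  \sum_(f <- s | P f) pr f <= (count P s)%:R.
Proof.
elim: s => [|x s IH]; first by rewrite big_nil.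
rewrite big_cons /=; case: (P x) => /=; last by rewrite add0n.
by rewrite natrD lerD ?pr_le1.
Qed.

Lemma sum_filter_le (T : eqType) (s : seq T) (P : pred T) (F : T -> R) :
  (forall i, 0 <= F i) -> \sum_(i <- s | P i) F i <= \sum_(i <- s) F i.
Proof.
move=> h; rewrite [X in _ <= X](bigID P) /= lerDl.
by apply: sumr_ge0 => i _.
Qed.

Lemma lambda_bound : exists L : R, forall g : seq (fact tau), uniq g ->
  \sum_(f <- g) pr f <= L.
Proof.
have h34 : ((3/4 : R)%:E < esum [set: inst] (fun D => (m D)%:E))%E.
  by rewrite mass_sum1 lte_fin; lra.
have [_ [A [finA _] <-] hA] := ereal_sup_gt h34.
set Af := fset_set A.
set Sseq := flatten [seq enum_fset D | D <- Af].
have pAf : 3/4 < prob I [set D | D \in Af].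
  rewrite -lte_fin -esum_massE; apply: (lt_le_trans hA); apply: esum_ge.
  exists A => //; split => // D AD /=.
  by rewrite /Af in_fset_set // mem_set.
have key_has : forall h, all (fun f => f \notin Sseq) h ->
    prob I [set D | has (fun f => f \in D) h] < 1/4.
  move=> h hS.
  have : (Ex I (fun D => (has (fun f => f \in D) h)%:R) + Ex I (fun D => (D \in Af)%:R)
          <= Ex I (fun _ => 1%R))%E.
    rewrite -ExD; last 2 first.
    - by move=> D; rewrite ler0n.
    - by move=> D; rewrite ler0n.
    apply: Ex_le => D; case: (boolP (D \in Af)) => DA; last first.
      by rewrite addr0; case: has.
    rewrite (_ : has _ _ = false) ?add0r //.
    apply/negP => /hasP [f fh fD]; move/allP: hS => /(_ f fh).
    rewrite (_ : f \in Sseq) //; rewrite /Sseq; apply/(@flatten_mapP _ _ (fun D0 : inst => enum_fset D0)); exists D; [exact: DA | exact: fD].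
  rewrite Ex1.
  rewrite -!probEx -EFinD lee_fin; lra.
have key_main : forall h, uniq h -> \sum_(f <- h) pr f <= 1 ->
    \sum_(f <- h) pr f <= 2 * prob I [set D | has (fun f => f \in D) h].
  move=> h uh s1.
  set s := \sum_(f <- h) pr f.
  set X1 := fun D : inst => \sum_(f <- h) ((f \in D)%:R : R).
  set X2 := fun D : inst => \sum_(f <- h)
              \sum_(g <- [seq g <- h | g != f]) ((f \in D)%:R * (g \in D)%:R : R).
  set Hs := fun D : inst => ((has (fun f => f \in D) h)%:R : R).
  have pw : forall D, X1 D + X1 D <= (Hs D + Hs D) + X2 D.
    move=> D.
    have e1 : X1 D = (count (fun f => f \in D) h)%:R by rewrite count_natr.
    have e2 : X2 D = X1 D * X1 D - X1 D.
      rewrite /X2 /X1 mulr_suml -sumrB big_seq [RHS]big_seq.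
      apply: eq_bigr => f fh; rewrite big_filter (bigD1_seq f fh uh) /= mulrDr -mulr_sumr.
      rewrite (_ : ((f \in D)%:R * (f \in D)%:R : R) = (f \in D)%:R);
        last by case: (f \in D); rewrite ?mulr1 ?mulr0.
      by rewrite addrAC subrr add0r.
    rewrite e2 e1 /Hs has_count.
    move: (count _ h) => c.
    rewrite -natrM -natrB; last by nia.
    rewrite -!natrD ler_nat.
    by case: c => [|c] /=; nia.
  have X1p : forall D, 0 <= X1 D by move=> D; apply: sumr_ge0 => f _.
  have Hsp : forall D, 0 <= Hs D by move=> D; rewrite ler0n.
  have X2p : forall D, 0 <= X2 D.
    by move=> D; apply: sumr_ge0 => f _; apply: sumr_ge0 => g _; rewrite mulr_ge0.
  have E1 : Ex I (fun D => X1 D + X1 D) = (Ex I X1 + Ex I X1)%E by rewrite ExD.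
  have E2 : Ex I (fun D => (Hs D + Hs D) + X2 D) = (Ex I Hs + Ex I Hs + Ex I X2)%E.
    rewrite (@ExD _ I (fun D => Hs D + Hs D) X2) ?ExD //.
    by move=> D; rewrite addr_ge0.
  have := Ex_le I pw; rewrite E1 E2.
  have eX1 : Ex I X1 = s%:E.
    rewrite /X1 Ex_sum; last by move=> *; rewrite ler0n.
    by rewrite /s -sumEFin; apply: eq_bigr => f _; rewrite Ex_pr.
  have eX2 : Ex I X2 = (\sum_(f <- h) \sum_(g <- [seq g <- h | g != f])
                          pr f * pr g)%:E.
    rewrite /X2 Ex_sum; last first.
      by move=> f D; apply: sumr_ge0 => g _; rewrite mulr_ge0.
    rewrite -sumEFin; apply: eq_bigr => f _.
    rewrite Ex_sum; last by move=> g D; rewrite mulr_ge0.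
    rewrite -sumEFin big_seq [RHS]big_seq; apply: eq_bigr => g.
    by rewrite mem_filter => /andP [gf _]; rewrite Ex_pair // eq_sym.
  rewrite eX1 eX2 -probEx -!EFinD lee_fin => H.
  have hss : \sum_(f <- h) \sum_(g <- [seq g <- h | g != f]) pr f * pr g <= s * s.
    rewrite /s mulr_suml; apply: ler_sum => f _; rewrite mulr_sumr.
    rewrite big_filter; apply: sum_filter_le => g.
    by rewrite mulr_ge0 ?pr_ge0.
  have s0 : 0 <= s by apply: sumr_ge0 => f _; apply: pr_ge0.
  have ss : s * s <= s by rewrite -[X in _ <= X](mulr1 s); apply: ler_wpM2l.
  lra.
have key_ind : forall h, uniq h -> all (fun f => f \notin Sseq) h ->
    \sum_(f <- h) pr f < 1/2.
  elim => [|x h IH] /=; first by rewrite big_nil; lra.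
  move=> /andP [xh uh] /andP [xS hS].
  have := IH uh hS => IHh.
  have px : pr x < 1/4.
    have := key_has [:: x]; rewrite /= xS /= => /(_ isT).
    rewrite /pr (_ : [set D : inst | (x \in D) || false] = [set D | x \in D]) //.
    by apply/seteqP; split => D /=; rewrite orbF.
  have hs : \sum_(f <- x :: h) pr f <= 1 by rewrite big_cons; lra.
  have := key_main (x :: h); rewrite /= xh uh => /(_ isT hs) h2.
  have := key_has (x :: h); rewrite /= xS hS => /(_ isT) h3.
  lra.
exists ((size Sseq)%:R + 1) => g ug.
rewrite (bigID (fun f => f \in Sseq)) /=; apply: lerD.
  apply: (le_trans (sum_le_count _ _)); rewrite ler_nat -size_filter.
  by apply: uniq_leq_size; [apply: filter_uniq | move=> f; rewrite mem_filter => /andP [] ].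
rewrite -big_filter; apply/ltW; apply: (lt_le_trans (key_ind _ _ _)); last by lra.
- exact: filter_uniq.
- exact: filter_all.
Qed.


Lemma Ex_pow2 (g : seq (fact tau)) : uniq g ->
  Ex I (fun D => ((2 ^ count (fun f => f \in D) g)%N%:R : R)) =
  (\prod_(f <- g) (1 + pr f))%:E.
Proof.
move=> ug.
have -> : (fun D : inst => ((2 ^ count (fun f => f \in D) g)%N%:R : R)) =
          (fun D => \sum_(s <- subs g) ((all (fun f => f \in D) s)%:R : R)).
  by apply: funext => D; rewrite -subs_count natr_sum.
rewrite Ex_sum; last by move=> *; rewrite ler0n.
rewrite -subs_prod -sumEFin big_seq [RHS]big_seq; apply: eq_bigr => s hs.
rewrite -probEx TI_seq //.
exact: (subseq_uniq (subs_subseq hs) ug).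
Qed.

Lemma tail_bound : exists L : R, forall n,
  prob I [set D | (n < isize D)%N] <= expR L / (2 ^ n.+1)%N%:R.
Proof.
have [L HL] := lambda_bound.
exists L => n.
rewrite -lee_fin -esum_massE.
apply: ge_ereal_sup => _ [X [finX XA] <-].
rewrite fsbig_finite //= sumEFin lee_fin.
set Xf := fset_set X.
set g := undup (flatten [seq enum_fset D | D <- Xf]).
have ug : uniq g by apply: undup_uniq.
have cnt : forall D, D \in Xf -> (n < count (fun f => f \in D) g)%N.
  move=> D DX.
  have XD : X D by move: DX; rewrite /Xf in_fset_set // inE.
  have := XA D XD; rewrite /= /isize => h1.
  apply: (leq_trans h1); rewrite -size_filter.
  apply: uniq_leq_size; first exact: fset_uniq.
  move=> f fD; rewrite mem_filter fD /= /g mem_undup.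
  by apply/(@flatten_mapP _ _ (fun D0 : inst => enum_fset D0)); exists D.
have p2 : (0 : R) < (2 ^ n.+1)%N%:R by rewrite ltr0n expn_gt0.
rewrite ler_pdivlMr // mulr_suml.
apply: (@le_trans _ _ (\sum_(D <- Xf) (2 ^ count (fun f => f \in D) g)%N%:R * m D)).
  rewrite big_seq [X in _ <= X]big_seq; apply: ler_sum => D DX.
  rewrite mulrC; apply: ler_wpM2r; first exact: mass_ge0.
  by rewrite ler_nat leq_exp2l //; apply: cnt.
rewrite -lee_fin -sumEFin.
apply: (@le_trans _ _ (Ex I (fun D => ((2 ^ count (fun f => f \in D) g)%N%:R : R)))).
  apply: esum_ge; exists [set` Xf]; first by split => //; apply: finite_fset.
  by rewrite fsbig_finite ?finite_fset // set_fsetK.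
rewrite Ex_pow2 // lee_fin.
apply: (@le_trans _ _ (\prod_(f <- g) expR (pr f))).
  apply: ler_prod_seq => f; rewrite expR_ge1Dx andbT.
  by rewrite addr_ge0 ?pr_ge0.
by rewrite -expR_sum ler_expR; apply: HL.
Qed.

End TI.

Import numFieldNormedType.Exports.
Local Open Scope classical_set_scope.
Local Open Scope ring_scope.

Lemma series_EFin (f : nat -> R) (l : R) : series f @ \oo --> l ->
  (\sum_(i <oo) (f i)%:E = l%:E)%E.
Proof.
move=> h; apply: cvg_lim => //.
apply: cvg_EFin; first by apply: nearW => //= x; rewrite sumEFin.
rewrite [X in X @ _ --> _](_ : _ = series f) //.
by apply/funext => x; rewrite /= sumEFin.
Qed.

Definition tau0 : schema := @Schema 0 (fun _ => 2%N).

Definition mkfact (i x : nat) : fact tau0 :=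
  existT (fun Rs : sym tau0 => (arity Rs).-tuple U) ord0 [tuple i; x].

Definition fst_of (f : fact tau0) : nat := nth 0%N (tval (tagged f)) 0.
Definition snd_of (f : fact tau0) : nat := nth 0%N (tval (tagged f)) 1.

Definition sz (i : nat) : nat := (2 ^ Nat.sqrt i)%N.

Definition Dinst (i : nat) : instance tau0 :=
  seq_fset tt (map (mkfact i) (iota 0 (sz i))).

Lemma mkfact_inj i : injective (mkfact i).
Proof. by move=> x y /(congr1 snd_of). Qed.

Lemma mem_Dinst i f : f \in Dinst i -> fst_of f = i.
Proof.
have := seq_fsetE tt (map (mkfact i) (iota 0 (sz i))) f => -> /mapP [x _ ->].
by [].
Qed.

Lemma size_Dinst i : #|` Dinst i| = sz i.
Proof.
rewrite size_seq_fset undup_id ?size_map ?size_iota //.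
by rewrite map_inj_uniq ?iota_uniq //; apply: mkfact_inj.
Qed.

Definition decode (D : instance tau0) : nat :=
  if enum_fset D is f :: _ then fst_of f else 0%N.

Lemma decodeK i : decode (Dinst i) = i.
Proof.
rewrite /decode; case E: (enum_fset (Dinst i)) => [|f s].
  by have := size_Dinst i; rewrite E /sz /= => /esym /eqP; rewrite expn_eq0.
by apply: mem_Dinst; rewrite -[f \in _]/(f \in enum_fset (Dinst i)) E mem_head.
Qed.

Lemma Dinst_inj : injective Dinst.
Proof. by move=> i j /(congr1 decode); rewrite !decodeK. Qed.

Definition q (i : nat) : R := geometric (3/4 : R) (1/4) i.

Lemma q_ge0 i : 0 <= q i.
Proof. by apply: geometric_ge0; lra. Qed.

Definition mass0 (D : instance tau0) : R :=
  if D == Dinst (decode D) then q (decode D) else 0.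

Lemma mass0_Dinst i : mass0 (Dinst i) = q i.
Proof. by rewrite /mass0 decodeK eqxx. Qed.

Lemma mass0_out D : (forall i, D != Dinst i) -> mass0 D = 0.
Proof. by move=> h; rewrite /mass0 (negPf (h _)). Qed.

Lemma mass0_ge0 D : 0 <= mass0 D.
Proof. by rewrite /mass0; case: ifP => _; rewrite ?q_ge0. Qed.

Lemma esum_range (F : instance tau0 -> R) : (forall D, 0 <= F D) ->
  (forall D, (forall i, D != Dinst i) -> F D = 0) ->
  (esum [set: instance tau0] (fun D => (F D)%:E) =
   \sum_(i <oo) (F (Dinst i))%:E)%E.
Proof.
move=> F0 Fout.
rewrite (esumID (range Dinst)); last by move=> D _; rewrite lee_fin.
rewrite [X in (_ + X)%E]esum1 ?adde0; last first.
  move=> D [_ /= nD]; rewrite Fout //= => i; apply/eqP => E; apply: nD.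
  by exists i.
rewrite setTI esum_image; last by move=> i j _ _; apply: Dinst_inj.
by rewrite nneseries_esumT // => n; rewrite lee_fin.
Qed.

Lemma mass0_sum1 :
  (esum [set: instance tau0] (fun D => (mass0 D)%:E) = 1)%E.
Proof.
rewrite esum_range; [|exact: mass0_ge0|exact: mass0_out].
under eq_eseriesr do rewrite mass0_Dinst.
have h : series (geometric (3/4 : R) (1/4)) @ \oo --> (3/4 * (1 - 1/4)^-1 : R).
  by apply: cvg_geometric_series; rewrite ger0_norm; lra.
rewrite (series_EFin h); congr EFin.
have -> : (1 - 1/4 : R) = 3/4 by lra.
by rewrite mulfV //; apply/eqP; lra.
Qed.

Definition P0 : pdb tau0 := PDB mass0_ge0 mass0_sum1.

Lemma P0_moments : finite_moments P0.
Proof.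
move=> k _.
set F := fun D : instance tau0 => ((isize D)%:R ^+ k * mass0 D : R).
have F0 : forall D, 0 <= F D by move=> D; rewrite mulr_ge0 ?exprn_ge0 ?mass0_ge0.
have -> : (fun D => (((isize D)%:R ^+ k * mass P0 D)%R)%:E) = (fun D => (F D)%:E).
  by [].
rewrite esum_range //; last by move=> D h; rewrite /F mass0_out ?mulr0.
set c : R := 3/4 * (2 ^ (k * k))%N%:R.
have hb : forall i, F (Dinst i) <= geometric c (1/2) i.
  move=> i; rewrite /F mass0_Dinst /isize size_Dinst /q /geometric /sz /c.
  have sq : (Nat.sqrt i * Nat.sqrt i <= i)%N.
    by have [h _] := PeanoNat.Nat.sqrt_spec' i; lia.
  have hn : ((2 ^ Nat.sqrt i) ^ k <= 2 ^ (k * k) * 2 ^ i)%N.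
    rewrite -expnM -expnD leq_exp2l //; nia.
  have hr : (((2 ^ Nat.sqrt i)%N%:R ^+ k : R) <= (2 ^ (k * k))%N%:R * (2 ^ i)%N%:R).
    by rewrite -natrX -natrM ler_nat.
  apply: (le_trans (ler_wpM2r _ hr)).
    by rewrite mulr_ge0 ?exprn_ge0 //; lra.
  rewrite natrX (natrX _ 2 i) mulrCA mulrA [X in _ <= X]mulrC -mulrA.
  have e : (2 ^+ i * (1/4) ^+ i : R) = (1/2) ^+ i.
    by rewrite -exprMn; congr (_ ^+ _); lra.
  by rewrite -(mulrA (2 ^+ (k * k))) e mulrA mulrC.
have hc : series (geometric c (1/2)) @ \oo --> (c * (1 - 1/2)^-1 : R).
  by apply: cvg_geometric_series; rewrite ger0_norm; lra.
have hle : (\sum_(i <oo) (F (Dinst i))%:E <= \sum_(i <oo) (geometric c (1/2) i)%:E)%E.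
  apply: lee_nneseries => i *; first by rewrite lee_fin F0.
  by rewrite lee_fin hb.
apply: (le_lt_trans hle).
by rewrite (series_EFin hc) ltry.
Qed.

Import numFieldNormedType.Exports.
Local Open Scope classical_set_scope.
Local Open Scope ring_scope.

Lemma prob_sub (tau : schema) (I : pdb tau) (A B : set (instance tau)) :
  A `<=` B -> prob I A <= prob I B.
Proof.
move=> AB; rewrite -lee_fin -!esum_massE esum_mkcond [X in (_ <= X)%E]esum_mkcond.
apply: le_esum => D _; case: ifP => DA.
  by rewrite (mem_set (AB _ (set_mem DA))).
by case: ifP => _; rewrite ?lee_fin ?mass_ge0.
Qed.

Lemma final_key (x y : R) : 3/4 * (8 * y) <= x -> x <= y -> 0 < y -> False.
Proof. lra. Qed.

Theorem theorem3p9 :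
  exists (tau : schema) (P : pdb tau), finite_moments P /\ ~ in_FO_TI P.
Proof.
exists tau0, P0; split; first exact: P0_moments.
move=> [tau [I [V [HTI Himg]]]].
have [L HL] := tail_bound HTI.
have [a [b [c [e Hv]]]] := view_size V.
set t := Num.Def.archi_bound (expR L).
have Et : expR L <= (2 ^ t)%N%:R.
  apply: (le_trans (ltW (archi_boundP (expR_ge0 L)))).
  by rewrite ler_nat ltnW // ltn_expl.
set K := (2 * b + b * (2 + t) + c + 1)%N.
have [r Hr] := poly_exp (a * K ^ e) (2 * e).
set n := (2 * (r * r) + 2 + t)%N.
have Hn : (a * (b * n + c).+1 ^ e < 2 ^ r)%N.
  apply: leq_ltn_trans Hr.
  rewrite -mulnA leq_mul2l; apply/orP; right.
  rewrite mulnC expnM -expnMn; apply: leq_expb.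
  have hX : ((r * r).+1 <= r.+1 ^ 2)%N by rewrite expnS expn1 mulSn mulnS; lia.
  apply: (leq_trans _ (leq_mul (leqnn K) hX)); rewrite /n /K.
  move: (r * r)%N => s.
  rewrite !mulnDl !mulnDr; nia.
set i := (r * r)%N.
have szi : #|` Dinst i| = (2 ^ r)%N.
  by rewrite size_Dinst /sz /i; congr (2 ^ _)%N; apply: PeanoNat.Nat.sqrt_square.
have h1 := Himg (Dinst i).
have h2 : prob I [set D | view_output V D (Dinst i)] <= prob I [set D | (n < isize D)%N].
  apply: prob_sub => D /= hv; have := Hv _ _ hv; rewrite szi => h.
  rewrite ltnNge; apply/negP => hD; move: Hn; rewrite ltnNge => /negP; apply.
  apply: (leq_trans h); rewrite leq_mul2l; apply/orP; right.
  by apply: leq_expb; rewrite ltnS leq_add2r leq_mul2l hD orbT.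
have h3 := HL n.
have hq : q i = 3/4 * (1/4) ^+ i by [].
have : 3/4 * (1/4) ^+ i <= expR L / (2 ^ n.+1)%N%:R.
  by rewrite -hq -(mass0_Dinst i) -[mass0 _]/(mass P0 (Dinst i)) h1; apply: (le_trans h2).
have e2 : (2 ^ n.+1)%N = (4 ^ i * 8 * 2 ^ t)%N.
  have -> : (4 ^ i = 2 ^ (2 * i))%N by rewrite expnM.
  rewrite (_ : 8%N = (2 ^ 3)%N) // -!expnD; congr (2 ^ _)%N; rewrite /n /i; lia.
rewrite e2 !natrM.
set X := ((4 ^ i)%N%:R : R).
set T := ((2 ^ t)%N%:R : R).
have X0 : 0 < X by rewrite ltr0n expn_gt0.
have T0 : 0 < T by rewrite ltr0n expn_gt0.
have eX : ((1/4) ^+ i : R) = X^-1.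
  by rewrite /X natrX div1r exprVn.
rewrite eX ler_pdivlMr; last by rewrite !mulr_gt0.
rewrite -(mulrA X) -(mulrA (3/4)) mulKf ?gt_eqF // => H.
exact: (final_key H Et T0).
Qed.
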